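(* Let $n\ge4$, let $C=\mathrm{circ}(1,0,\ldots,0,1)$ of order $n-1$, and let $X=2(CC^T+I_{n-1})^{-1}\left[ (n-1)I_{n-1}-J_{n-1}\right]$ and $Y= J_{n-1}+C^TX$ (these are the blocks of the Moore–Penrose inverse $M^+=\frac{1}{2(n-1)}\left[\begin{smallmatrix}2\mathbf{1} & X\\ -\mathbf{1} & Y\end{smallmatrix}\right]$ of the incidence matrix $M=\left[\begin{smallmatrix}\mathbf{1}^T & \mathbf{0}^T\\ I_{n-1} & C\end{smallmatrix}\right]$ of the wheel graph $W_n$). Then $X$ is a symmetric circulant matrix and $Y$ is a circulant matrix.
   Context: For $c_0,\dots,c_{k-1}$, $\mathrm{circ}(c_0,\ldots,c_{k-1})$ denotes the $k\times k$ circulant matrix whose $(i,j)$-entry is $c_{(j-i)\bmod k}$. $J_{n-1}$ is the $(n-1)\times(n-1)$ all-ones matrix, $I_{n-1}$ the identity, $\mathbf 1$ the all-ones vector. The matrix $CC^T+I_{n-1}=\mathrm{circ}(3,1,0,\ldots,0,1)$ is invertible. The wheel graph $W_n$ is a cycle on $n-1$ vertices together with a hub vertex adjacent to all cycle vertices. *)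

(* Defs.v *)
From mathcomp Require Import all_boot all_order all_algebra.
Set Implicit Arguments. Unset Strict Implicit. Unset Printing Implicit Defensive.
Import Order.TTheory GRing.Theory Num.Theory.
Local Open Scope ring_scope.

Definition circ (R : Type) (k : nat) (c : nat -> R) : 'M[R]_k :=
  \matrix_(i < k, j < k) c ((j + k - i) %% k)%N.

Definition is_circulant (R : Type) (k : nat) (A : 'M[R]_k) : Prop :=
  exists c : nat -> R, A = circ k c.

Definition wheelC (R : nzRingType) (k : nat) : 'M[R]_k :=
  circ k (fun d => if (d == 0)%N || (d == k.-1)%N then 1 else 0).

Definition Jmx (R : nzRingType) (k : nat) : 'M[R]_k := const_mx 1.

Definition wheelX (R : fieldType) (n : nat) : 'M[R]_(n.-1) :=
  let C := wheelC R n.-1 in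
  2%:R *: (invmx (C *m C^T + 1%:M) *m ((n.-1)%:R *: 1%:M - Jmx R n.-1)).

Definition wheelY (R : fieldType) (n : nat) : 'M[R]_(n.-1) :=
  Jmx R n.-1 + (wheelC R n.-1)^T *m wheelX R n.

(* Main.v *)
Require Import Defs.
From mathcomp Require Import all_boot all_order all_algebra.
From mathcomp Require Import ring.
Set Implicit Arguments. Unset Strict Implicit.
Import Order.TTheory GRing.Theory Num.Theory.
Local Open Scope ring_scope.

Section Circ.
Variables (R : fieldType) (p : nat).
Local Notation k := p.+2.
Local Notation I := ('I_p.+2).

Definition circ0 (A : 'M[R]_k) := forall i j : I, A i j = A 0 (j - i).

Lemma val_sub (i j : I) : val (j - i) = ((j + k - i) %% k)%N.
Proof.
rewrite /= modnDmr addnBA //; exact: ltnW (ltn_ord i).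
Qed.

Lemma circ0_circ c : circ0 (circ k c).
Proof. by move=> i j; rewrite !mxE -!val_sub subr0. Qed.

Lemma circ0_is A : circ0 A -> is_circulant A.
Proof.
move=> hA; exists (fun d => A 0 (inZp d)); apply/matrixP => i j.
by rewrite !mxE hA -val_sub valZpK.
Qed.

Lemma circ0D A B : circ0 A -> circ0 B -> circ0 (A + B).
Proof. by move=> hA hB i j; rewrite !mxE hA hB. Qed.
Lemma circ0N A : circ0 A -> circ0 (- A).
Proof. by move=> hA i j; rewrite !mxE hA. Qed.
Lemma circ0Z a A : circ0 A -> circ0 (a *: A).
Proof. by move=> hA i j; rewrite !mxE hA. Qed.
Lemma circ0_const a : circ0 (const_mx a).
Proof. by move=> i j; rewrite !mxE. Qed.
Lemma circ0_scalar a : circ0 (a%:M).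
Proof.
move=> i j; rewrite !mxE; congr (_ *+ _).
by rewrite eq_sym -subr_eq0 eq_sym.
Qed.
Lemma circ0T A : circ0 A -> circ0 A^T.
Proof. by move=> hA i j; rewrite !mxE hA [in RHS]hA sub0r opprB. Qed.

Lemma circ0M A B : circ0 A -> circ0 B -> circ0 (A *m B).
Proof.
move=> hA hB i j; rewrite !mxE.
rewrite (reindex_inj (addIr i)) /=.
apply: eq_bigr => l _.
rewrite hA [B _ j]hB [B l _]hB addrK.
by rewrite opprD addrA addrAC.
Qed.

Lemma circ0_comm A B : circ0 A -> circ0 B -> A *m B = B *m A.
Proof.
move=> hA hB; apply/matrixP => i j; rewrite !mxE.
have inj : injective (fun l : I => i + j - l).
  by move=> x y /addrI /oppr_inj.
rewrite (reindex_inj inj) /=.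
apply: eq_bigr => l _.
rewrite hA [B _ j]hB [B i _]hB [A _ j]hA mulrC; congr (B 0 _ * A 0 _); ring.
Qed.

Definition Pm : 'M[R]_k := \matrix_(i, j) (j - i == 1)%:R.

Lemma circ0P : circ0 Pm.
Proof. by move=> i j; rewrite !mxE subr0. Qed.

Lemma comm_circ0 B : Pm *m B = B *m Pm -> circ0 B.
Proof.
move=> h.
have step : forall i j : I, B (i + 1) j = B i (j - 1).
  move=> i j; have := congr1 (fun M : 'M[R]_k => M i j) h; rewrite !mxE.
  rewrite (bigD1 (i + 1)) //= big1 ?addr0; last first.
    by move=> l hl; rewrite !mxE subr_eq (addrC 1 i) (negbTE hl) mul0r.
  rewrite (bigD1 (j - 1)) //= big1 ?addr0; last first.
    by move=> l hl; rewrite !mxE subr_eq (addrC 1 l) -subr_eq eq_sym (negbTE hl) mulr0.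
  rewrite !mxE; have -> : i + 1 - i = 1 by ring.
  have -> : j - (j - 1) = 1 by ring.
  by rewrite !eqxx mul1r mulr1.
suff H : forall t (j : I), B t%:R j = B 0 (j - t%:R).
  by move=> i j; rewrite -{1}(natr_Zp i) H natr_Zp.
elim=> [|t IH] j; first by rewrite subr0.
by rewrite -natr1 step IH opprD addrA addrAC.
Qed.

Lemma circ0V A : circ0 A -> circ0 (invmx A).
Proof.
move=> hA; apply: comm_circ0.
have c : GRing.comm Pm (A : 'M[R]_k).
  by rewrite /GRing.comm -!mulmxE circ0_comm //; exact: circ0P.
have := commrV c; rewrite /GRing.comm -!mulmxE; exact.
Qed.

End Circ.

Theorem mainTheorem2 (R : realFieldType) (n : nat) (hn : (4 <= n)%N) :
  (wheelX R n)^T = wheelX R n /\ is_circulant (wheelX R n) /\ is_circulant (wheelY R n).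
Proof.
case: n hn => [|[|[|p]]] // _.
rewrite /wheelY /wheelX /Jmx /=.
set C := wheelC R p.+2.
have hC : circ0 C by exact: circ0_circ.
set A := C *m C^T + 1%:M.
set B := _ *: 1%:M - const_mx 1.
have hA : circ0 A by apply: circ0D; [apply: circ0M => //; apply: circ0T|apply: circ0_scalar].
have hB : circ0 B by apply: circ0D; [apply: circ0Z; apply: circ0_scalar|apply: circ0N; apply: circ0_const].
have hX : circ0 (2%:R *: (invmx A *m B)) by apply: circ0Z; apply: circ0M => //; apply: circ0V.
split; last split.
- rewrite linearZ /= trmx_mul trmx_inv.
  have -> : A^T = A by rewrite /A linearD /= trmx_mul trmxK tr_scalar_mx.
  have -> : B^T = B by rewrite /B linearB /= linearZ /= tr_scalar_mx trmx_const.
  by rewrite circ0_comm //; apply: circ0V.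
- exact: circ0_is.
- apply: circ0_is; apply: circ0D; first exact: circ0_const.
  by apply: circ0M => //; apply: circ0T.
Qed.
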